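(* Let $n$ be a positive integer, $\lambda$ an infinite cardinal, and $\tau$ a shift-continuous feebly compact $T_1$-topology on the semilattice $\exp_n\lambda$. Then for any point $x\in\exp_n\lambda$ and any open neighbourhood $U(x)$ of $x$ in $(\exp_n\lambda,\tau)$ there exist finitely many $x_1,\ldots,x_m\in{\uparrow}x\setminus\{x\}$ such that $${\uparrow}x\setminus\operatorname{cl}_{\exp_n\lambda}(U(x))\subseteq{\uparrow}x_1\cup\cdots\cup{\uparrow}x_m.$$
   Context: For a positive integer $n$ and a cardinal $\lambda$, $\exp_n\lambda=\{A\subseteq\lambda\colon |A|\leqslant n\}$, regarded as a semilattice under $\cap$; its natural order is inclusion. For $e$ in a semilattice, ${\uparrow}e=\{f\colon e\leqslant f\}$. A topology on a semilattice is shift-continuous if the semilattice operation is separately continuous. A topological space is feebly compact if every locally finite open cover of it is finite. *)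

(* Defs.v *)
From mathcomp Require Import all_boot.
From mathcomp Require Import finmap.
From mathcomp Require Import boolp classical_sets cardinality.

Set Implicit Arguments.
Unset Strict Implicit.
Unset Printing Implicit Defensive.

Local Open Scope classical_set_scope.

Definition exp_set (L : choiceType) (n : nat) :=
  {A : {fset L} | (#|` A| <= n)%N}.

Definition exp_meet (L : choiceType) (n : nat) (a b : exp_set L n) : exp_set L n :=
  exist (fun A : {fset L} => (#|` A| <= n)%N) (val a `&` val b)%fset
    (leq_trans (fsubset_leq_card (fsubsetIl (val a) (val b))) (valP a)).

Definition exp_le (L : choiceType) (n : nat) (e f : exp_set L n) : Prop :=
  exp_meet e f = e.

Definition upset (L : choiceType) (n : nat) (e : exp_set L n) : set (exp_set L n) :=
  [set f | exp_le e f].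

Definition is_topology (X : Type) (op : set (set X)) : Prop :=
  [/\ op set0, op setT,
      (forall U V, op U -> op V -> op (U `&` V)) &
      (forall F : set (set X), F `<=` op -> op (\bigcup_(U in F) U))].

Definition T1_topology (X : Type) (op : set (set X)) : Prop :=
  forall x y : X, x <> y -> exists U, [/\ op U, U x & ~ U y].

Definition closure_in (X : Type) (op : set (set X)) (A : set X) : set X :=
  [set x | forall U, op U -> U x -> U `&` A !=set0].

Definition continuous_map (X : Type) (op : set (set X)) (f : X -> X) : Prop :=
  forall V, op V -> op (f @^-1` V).

Definition shift_continuous (L : choiceType) (n : nat)
  (op : set (set (exp_set L n))) : Prop :=
  (forall a, continuous_map op (fun x => exp_meet a x)) /\
  (forall a, continuous_map op (fun x => exp_meet x a)).

Definition open_cover (X : Type) (op : set (set X)) (C : set (set X)) : Prop :=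
  C `<=` op /\ \bigcup_(U in C) U = setT.

Definition locally_finite (X : Type) (op : set (set X)) (C : set (set X)) : Prop :=
  forall x : X, exists W, [/\ op W, W x &
     finite_set [set U | C U /\ U `&` W !=set0]].

Definition feebly_compact (X : Type) (op : set (set X)) : Prop :=
  forall C : set (set X), open_cover op C -> locally_finite op C -> finite_set C.

(* Main.v *)
Require Import Defs.
From mathcomp Require Import all_boot.
From mathcomp Require Import finmap.
From mathcomp Require Import boolp classical_sets cardinality.
From mathcomp Require Import zify.
Set Implicit Arguments.
Unset Strict Implicit.
Unset Printing Implicit Defensive.
Local Open Scope classical_set_scope.

Lemma upsetE (L : choiceType) (n : nat) (e f : exp_set L n) :
  upset e f <-> (val e `<=` val f)%fset.
Proof.
rewrite /upset /exp_le /=; split.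
  by move=> <-; rewrite /exp_meet /= fsubsetIr.
move=> h; apply: val_inj => /=; exact/fsetIidPl.
Qed.

Lemma open_local (X : Type) (op : set (set X)) (A : set X) :
  is_topology op ->
  (forall x, A x -> exists U, [/\ op U, U x & U `<=` A]) -> op A.
Proof.
move=> [_ _ _ hU] h.
have -> : A = \bigcup_(U in [set U | op U /\ U `<=` A]) U.
  apply/seteqP; split => [x Ax|x [U [_ UA] Ux]]; last exact: UA.
  by have [U [oU Ux UA]] := h x Ax; exists U.
by apply: hU => U [].
Qed.

Lemma open_compl1 (X : Type) (op : set (set X)) (y : X) :
  is_topology op -> T1_topology op -> op (~` [set y]).
Proof.
move=> hT hT1; apply: open_local => // x xy.
have [U [oU Ux Uy]] := hT1 x y xy.
by exists U; split => // z Uz zy; apply: Uy; rewrite -zy.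
Qed.

Lemma open_bigcap_seq (X : Type) (op : set (set X)) (A : eqType)
  (P : A -> set X) (s : seq A) :
  is_topology op -> (forall a, op (P a)) ->
  op [set w | forall a, a \in s -> P a w].
Proof.
move=> hT hP; elim: s => [|a s IH].
  have -> : [set w | forall a, a \in [::] -> P a w] = setT.
    by apply/seteqP; split => // w _ a.
  by case: hT.
have -> : [set w | forall b, b \in a :: s -> P b w] =
   P a `&` [set w | forall a, a \in s -> P a w].
  apply/seteqP; split => [w h|w [h1 h2] b].
    by split; [apply: h; rewrite inE eqxx | move=> b bs; apply: h; rewrite inE bs orbT].
  by rewrite inE => /orP [/eqP ->|]; [| apply: h2].
by case: hT => _ _ hI _; apply: hI.
Qed.

Lemma upset_closed (L : choiceType) (n : nat) (op : set (set (exp_set L n))) y :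
  is_topology op -> T1_topology op -> shift_continuous op -> op (~` upset y).
Proof.
move=> hT hT1 [hS _].
exact: (hS y _ (open_compl1 y hT hT1)).
Qed.

Lemma open_valneq (L : choiceType) (n : nat) (op : set (set (exp_set L n))) t :
  is_topology op -> T1_topology op -> op [set w | val w != t].
Proof.
move=> hT hT1.
have [[w0 w0t]|nw] := pselect (exists w0 : exp_set L n, val w0 = t).
  have -> : [set w : exp_set L n | val w != t] = ~` [set w0].
    apply/seteqP; split => w /=.
      by move=> h ww0; move: h; rewrite ww0 w0t eqxx.
    by move=> h; apply/eqP => wt; apply: h; apply: val_inj; move: wt; rewrite -w0t; exact. 
  exact: open_compl1.
have -> : [set w : exp_set L n | val w != t] = setT.
  by apply/seteqP; split => // w _; apply/eqP => wt; apply: nw; exists w.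
by case: hT.
Qed.

Lemma upset_open (L : choiceType) (n : nat) (op : set (set (exp_set L n))) y :
  is_topology op -> T1_topology op -> shift_continuous op -> op (upset y).
Proof.
move=> hT hT1 [hS _].
pose P := enum_fset (fpowerset (val y) `\ val y)%fset.
have oV := open_bigcap_seq P hT (fun t => open_valneq t hT hT1).
have -> : upset y = (fun s => exp_meet y s) @^-1`
     [set w | forall a, a \in P -> val w != a].
  apply/seteqP; split => s /=.
    move=> hs a aP; have e : (val y `&` val s)%fset = val y := congr1 val hs.
    rewrite /= e; apply/eqP => ya.
    by move: aP; rewrite /P -ya in_fsetD in_fset1 eqxx.
  move=> h; apply: val_inj => /=.
  have := h (val y `&` val s)%fset.
  case: (boolP ((val y `&` val s)%fset == val y)) => [/eqP //|ne].
  rewrite /P in_fsetD in_fset1 ne fpowersetE fsubsetIl /=.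
  by move=> /(_ isT); rewrite eqxx.
exact: hS.
Qed.

Definition single (L : choiceType) (n : nat) (hn : (0 < n)%N) (a : L) : exp_set L n :=
  exist (fun A : {fset L} => (#|` A| <= n)%N) [fset a]%fset
    (eq_ind_r (fun m => (m <= n)%N) hn (cardfs1 a)).

Lemma open_avoid (L : choiceType) (n : nat) (op : set (set (exp_set L n)))
  (hn : (0 < n)%N) a :
  is_topology op -> T1_topology op -> shift_continuous op ->
  op [set s | a \notin val s].
Proof.
move=> hT hT1 hS.
have -> : [set s : exp_set L n | a \notin val s] = ~` upset (single hn a).
  apply/seteqP; split => s /=; rewrite upsetE /= fsub1set.
    by move=> /negP.
  by move=> /negP.
exact: upset_closed.
Qed.

Lemma full_singleton (L : choiceType) (n : nat) (z s : exp_set L n) :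
  #|` val z| = n -> upset z s -> s = z.
Proof.
move=> hz /upsetE h; apply: val_inj; apply/eqP; rewrite eq_sym.
rewrite -(fsubset_leqif_cards h).2 eqn_leq (fsubset_leq_card h) hz.
exact: (valP s).
Qed.

Lemma disjoint_family_false (L : choiceType) (n : nat) (op : set (set (exp_set L n))) :
  is_topology op -> T1_topology op -> shift_continuous op -> feebly_compact op ->
  forall (x : exp_set L n) V, op V -> V x ->
  (forall G : {fset L}, exists z : exp_set L n,
     [/\ #|` val z| = n, (val x `<=` val z)%fset, ~ V z &
         forall a, a \in G -> a \notin val x -> a \notin val z]) -> False.
Proof.
move=> hT hT1 hS hF x V oV Vx /choice [f hf].
pose G k := iter k (fun G => G `|` val (f G))%fset fset0.
pose z k := f (G k).
have Gmono : forall j k, (j <= k)%N -> (G j `<=` G k)%fset.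
  move=> j k /subnK <-; elim: (k - j)%N => [|m IH]; first exact: fsubset_refl.
  rewrite addSn /=; apply: fsubset_trans IH _; exact: fsubsetUl.
have zsub : forall j k, (j < k)%N -> (val (z j) `<=` G k)%fset.
  move=> j k jk; apply: fsubset_trans (Gmono _ _ jk); rewrite /= /z.
  exact: fsubsetUr.
have common : forall j k a, (j < k)%N -> a \in val (z j) -> a \in val (z k) ->
    a \in val x.
  move=> j k a jk aj ak; apply/negPn/negP => ax.
  have [_ _ _ h] := hf (G k).
  by move: (h a (fsubsetP (zsub _ _ jk) a aj) ax); rewrite -/(z k) ak.
have common' : forall j k a, j != k -> a \in val (z j) -> a \in val (z k) ->
    a \in val x.
  move=> j k a jk; case: (ltngtP j k) => [h|h|h].
  - exact: common.
  - by move=> ??; apply: (common k j).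
  - by rewrite h eqxx in jk.
have zx : forall k, z k <> x.
  by move=> k e; have [_ _ h _] := hf (G k); apply: h; rewrite -/(z k) e.
have zup : forall k, upset x (z k).
  by move=> k; apply/upsetE; have [] := hf (G k).
have zfull : forall k, #|` val (z k)| = n by move=> k; have [] := hf (G k).
have huniq : forall w, upset x w -> w <> x -> forall j k,
    upset w (z j) -> upset w (z k) -> j = k.
  move=> w /upsetE xw wx j k /upsetE wj /upsetE wk.
  have : ~~ (val w `<=` val x)%fset.
    apply/negP => wx'; apply: wx; apply: val_inj; apply/eqP.
    by rewrite eqEfsubset wx' xw.
  move=> /fsubsetPn [b bw bx]; have [//|jk] := eqVneq j k.
  by move: bx; rewrite (common' j k b jk (fsubsetP wj b bw) (fsubsetP wk b bw)).
have hinj : forall j k, z j = z k -> j = k.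
  move=> j k e; have [//|jk] := eqVneq j k; exfalso; apply: (zx k); apply: val_inj.
  apply/eqP; rewrite eqEfsubset; apply/andP; split; last by apply/upsetE.
  apply/fsubsetP => a ak; apply: (common' j k a jk) => //; by rewrite e.
have nbhd : forall w, exists N k0, [/\ op N, N w &
    forall j, N (z j) -> j = k0].
  move=> w; have [xw|nxw] := pselect (upset x w); last first.
    by exists (~` upset x), 0%N; split => // [|j /(_ (zup j))//];
      exact: upset_closed.
  have [->|wx] := pselect (w = x).
    by exists V, 0%N; split => // j Vj; have [_ _ h _] := hf (G j); case: h.
  have oW := upset_open w hT hT1 hS.
  have [[k0 hk0]|nk] := pselect (exists k, upset w (z k)).
    exists (upset w), k0; split => //; first by apply/upsetE; exact: fsubset_refl.
    by move=> j hj; apply: (huniq w xw wx).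
  exists (upset w), 0%N; split => //; first by apply/upsetE; exact: fsubset_refl.
  by move=> j hj; exfalso; apply: nk; exists j.
have Zc : op (~` range z).
  apply: open_local => // w wZ.
  have [N [k0 [oN Nw Nz]]] := nbhd w.
  exists (N `&` ~` [set z k0]); split.
  - by have [_ _ hI _] := hT; apply: hI => //; apply: open_compl1.
  - split; first exact: Nw.
    by move=> /= e; apply: wZ; exists k0; rewrite ?e.
  - by move=> s [Ns ns] [j _ e]; subst s; apply: ns; rewrite (Nz j Ns).
pose C := [set S | (exists k, S = [set z k]) \/ S = ~` range z].
have hsing : forall k, [set z k] = upset (z k).
  move=> k; apply/seteqP; split => s /=.
    by move=> ->; apply/upsetE; exact: fsubset_refl.
  exact: full_singleton.
have cov : open_cover op C.
  split.
    move=> S [[k ->]|->] //; rewrite hsing; exact: upset_open.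
  apply/seteqP; split => // w _.
  have [[k _ e]|nZ] := pselect (range z w).
    by exists [set z k]; [left; exists k | ].
  by exists (~` range z); [right|].
have lf : locally_finite op C.
  move=> w; have [N [k0 [oN Nw Nz]]] := nbhd w.
  exists N; split => //.
  apply: (@sub_finite_set _ _ [set [set z k0]; ~` range z]) => //.
  move=> S [[[k ->]|->] [s [Ss Ns]]]; last by right.
  by left; move: Ns; rewrite /= Ss => Ns; rewrite (Nz k Ns).
have fC := hF C cov lf.
apply: infinite_nat.
apply: (@sub_finite_set _ _ ((fun k => [set z k]) @^-1` C)).
  by move=> k _; left; exists k.
apply: finite_preimage => // j k _ _ e.
apply: hinj; have : [set z j] (z j) by [].
by rewrite e.
Qed.

Lemma addpt_proof (L : choiceType) (n : nat) (x : exp_set L n) (a : L) :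
  (#|` val x| < n)%N -> (#|` (a |` val x)%fset| <= n)%N.
Proof. by move=> h; rewrite cardfsU1; apply: leq_trans (leq_add (leq_b1 _) (leqnn _)) _; rewrite add1n. Qed.

Definition addpt (L : choiceType) (n : nat) (x : exp_set L n) (a : L)
  (h : (#|` val x| < n)%N) : exp_set L n :=
  exist (fun A : {fset L} => (#|` A| <= n)%N) (a |` val x)%fset (addpt_proof a h).

Lemma fresh (L : choiceType) : infinite_set [set: L] ->
  forall F : {fset L}, exists a, a \notin F.
Proof.
move=> hinf F; apply: contrapT => h; apply: hinf.
apply: (@sub_finite_set _ _ [set` F]); last exact: finite_fset.
move=> a _ /=; apply: contrapT => aF; apply: h; exists a; exact/negP.
Qed.

Lemma lemmaM (L : choiceType) (n : nat) (op : set (set (exp_set L n))) :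
  (0 < n)%N -> infinite_set [set: L] ->
  is_topology op -> T1_topology op -> shift_continuous op -> feebly_compact op ->
  forall k (y : exp_set L n), (n - #|` val y| <= k)%N ->
  forall O, op O -> O y ->
  exists z, [/\ O z, (val y `<=` val z)%fset & #|` val z| = n].
Proof.
move=> hn hinf hT hT1 hS hF k; elim: k => [|k IH] y hk O oO Oy.
  exists y; split; rewrite ?fsubset_refl //.
  by have := valP y; lia.
have [hy|hy] := eqVneq #|` val y| n.
  by exists y; split; rewrite ?fsubset_refl.
have hy' : (#|` val y| < n)%N by have := valP y; lia.
have [[y' [Oy' yy' ny']]|nex] :=
    pselect (exists y', [/\ O y', upset y y' & y' <> y]).
  have lt : (#|` val y| < #|` val y'|)%N.
    apply: fproper_ltn_card; rewrite fproperEneq; apply/andP; split.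
      by apply/eqP => e; apply: ny'; apply: val_inj.
    exact/upsetE.
  have [z [Oz yz zn]] := IH y' ltac:(lia) O oO Oy'.
  exists z; split => //; apply: fsubset_trans yz; exact/upsetE.
exfalso.
have [_ _ hI _] := hT.
apply: (@disjoint_family_false L n op hT hT1 hS hF y (O `&` upset y)).
- by apply: hI => //; exact: upset_open.
- by split => //; apply/upsetE; exact: fsubset_refl.
move=> G.
have [a aG] := fresh hinf (G `|` val y)%fset.
move: aG; rewrite in_fsetU negb_or => /andP [aG ay].
pose y1 := addpt a hy'.
pose O1 := upset y1 `&` [set w | forall b, b \in (G `\` val y)%fset -> b \notin val w].
have oO1 : op O1.
  apply: hI; first exact: upset_open.
  apply: open_bigcap_seq => // b; exact: open_avoid.
have O1y1 : O1 y1.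
  split; first by apply/upsetE; exact: fsubset_refl.
  move=> b; rewrite in_fsetD /= in_fset1U negb_or => /andP [by_ bG].
  rewrite by_ andbT; apply/eqP => e; subst b; by rewrite bG in aG.
have hk1 : (n - #|` val y1| <= k)%N.
  by rewrite /= cardfsU1 ay /=; change (sval y) with (val y); lia.
have [z [[_ O1z] y1z zn]] := IH y1 hk1 O1 oO1 O1y1.
exists z; split => //.
- apply: fsubset_trans y1z; exact: fsubsetU1.
- move=> [Oz yz]; apply: nex; exists z; split => // e.
  by move: zn; rewrite e; move/eqP: hy.
- move=> b bG by_; apply: O1z; by rewrite in_fsetD bG by_.
Qed.

Theorem proposition9 (n : nat) (L : choiceType) (op : set (set (exp_set L n))) :
  (0 < n)%N ->
  infinite_set [set: L] ->
  is_topology op ->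
  shift_continuous op ->
  feebly_compact op ->
  T1_topology op ->
  forall (x : exp_set L n) (U : set (exp_set L n)),
    op U -> U x ->
    exists xs : seq (exp_set L n),
      (forall y, y \in xs -> upset x y /\ y <> x) /\
      (upset x `\` closure_in op U
         `<=` [set z | exists2 y, y \in xs & upset y z]).
Proof.
move=> hn hinf hT hS hF hT1 x U oU Ux.
have clx : closure_in op U x by move=> W _ Wx; exists x.
have [_ _ hI _] := hT.
apply: contrapT => nex.
have [hx|hx] := eqVneq #|` val x| n.
  apply: nex; exists [::]; split => // z [xz ncl]; exfalso; apply: ncl.
  by rewrite (full_singleton hx xz).
have hx' : (#|` val x| < n)%N by have := valP x; lia.
apply: (@disjoint_family_false L n op hT hT1 hS hF x U oU Ux) => G.
pose xs := [seq addpt b hx' | b <- enum_fset G & b \notin val x].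
have hxs : forall y, y \in xs -> upset x y /\ y <> x.
  move=> y /mapP [b]; rewrite mem_filter => /andP [bx _] ->; split.
    by apply/upsetE; exact: fsubsetU1.
  move=> e; have : b \in val (addpt b hx') by rewrite /= fset1U1.
  by rewrite e (negPf bx).
have [z [[xz ncl] nz]] : exists z, (upset x z /\ ~ closure_in op U z) /\
    ~ (exists2 y, y \in xs & upset y z).
  apply: contrapT => h; apply: nex; exists xs; split => // z hz.
  apply: contrapT => h2; apply: h; exists z; split => //.
have [W [oW Wz WU]] : exists W, [/\ op W, W z & forall s, W s -> ~ U s].
  apply: contrapT => h; apply: ncl => W oW Wz; apply: contrapT => hne.
  by apply: h; exists W; split => // s Ws Us; apply: hne; exists s; split.
pose O := (W `&` upset z) `&`
   [set w | forall b, b \in (G `\` val x)%fset -> b \notin val w].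
have oO : op O.
  have [_ _ hI2 _] := hT.
  apply hI2; first by apply hI2 => //; exact: upset_open.
  apply: open_bigcap_seq => // b; exact: open_avoid.
have Oz : O z.
  split; first by split => //; apply/upsetE; exact: fsubset_refl.
  move=> b; rewrite in_fsetD => /andP [bx bG]; apply/negP => bz.
  apply: nz; exists (addpt b hx').
    by apply/mapP; exists b => //; rewrite mem_filter bx.
  apply/upsetE => /=; apply/fsubsetP => c; rewrite in_fset1U => /orP [/eqP ->//|].
  by apply: (fsubsetP (proj1 (upsetE _ _) xz)).
have [z' [Oz'' zz' zn]] := lemmaM hn hinf hT hT1 hS hF (leqnn _) oO Oz.
move: Oz''; rewrite /O /setI /= => -[[Wz' _] Oz'].
exists z'; split => //.
- apply: fsubset_trans zz'; exact/upsetE.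
- exact: WU.
- by move=> b bG bx; apply: Oz'; rewrite in_fsetD bG bx.
Qed.
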